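(* Let $K \ge 2$, $k \in \{1,\dots,K-1\}$, $\mathbf{x}_0 = \mathbf{e}_k \in \{0,1\}^K$, and let $\mathbf{e}_K$ be the $K$-th standard basis vector. Let $\boldsymbol{\epsilon} \sim \mathcal{N}(\mathbf{0},\mathbf{I}_K)$, $Y = \max_{j\neq k}\epsilon_j - \epsilon_k$, and $F_Y$ the cumulative distribution function of $Y$. Let $(\gamma_t)_{t\in[0,1]}$ be a schedule with $\gamma_t \in (0,1)$, and let $(\tilde{\alpha}_t,\tilde{\sigma}_t)_{t\in[0,1]}$ be real coefficients with $\tilde{\sigma}_t>0$, $\tilde{\alpha}_t^2+\tilde{\sigma}_t^2=1$, and $F_Y(\tilde{\alpha}_t/\tilde{\sigma}_t) = \gamma_t$ for all $t$. Define $\mathbf{w}_t = \tilde{\alpha}_t\mathbf{x}_0 + \tilde{\sigma}_t\boldsymbol{\epsilon}$ and $\mathbf{z}_t = \mathbf{x}_0$ if $\mathbf{w}_t^{(k)} > \max_{j\neq k}\mathbf{w}_t^{(j)}$, $\mathbf{z}_t = \mathbf{e}_K$ otherwise. Let $u = F_Y(Y)$. Then $u$ is uniformly distributed on $[0,1]$, and for every $t\in[0,1]$, $$\mathbf{z}_t = \begin{cases}\mathbf{x}_0 & \text{if } \gamma_t > u,\\ \mathbf{e}_K & \text{otherwise.}\end{cases}$$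
   Context: This is the masked-diffusion setting in which each token's discrete state is the projection of a variance-preserving Gaussian latent along a deterministic path with a single fixed noise vector $\boldsymbol{\epsilon}$; $\gamma_t$ is the probability that the token is unmasked at time $t$. *)

(* Defs.v *)
From HB Require Import structures.
From mathcomp Require Import all_boot all_order all_algebra.
From mathcomp Require Import all_classical all_reals all_analysis.
Set Implicit Arguments. Unset Strict Implicit. Unset Printing Implicit Defensive.
Import Order.TTheory GRing.Theory Num.Theory.
Local Open Scope classical_set_scope.
Local Open Scope ring_scope.

(* Mutual independence of a finite family of real random variables:
   the product rule for every choice of Borel sets (sets B i = setT
   recover every sub-family). *)
Definition mutually_independent (d : measure_display) (T : measurableType d)
  (R : realType) (P : probability T R) (K : nat) (X : 'I_K -> T -> R) : Prop :=
  forall B : 'I_K -> set R, (forall i, measurable (B i)) ->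
    P (\bigcap_(i in [set: 'I_K]) (X i @^-1` B i)) =
    (\prod_(i < K) P (X i @^-1` B i))%E.

(* Standard basis vector e_i of R^K, indexed from 0: e_ i has a 1 in
   coordinate i (as a natural number) and 0 elsewhere. *)
Definition ebasis (R : realType) (K : nat) (i : nat) : 'rV[R]_K :=
  \row_(j < K) ((j : nat) == i)%:R.

(* max_{j <> k} v^(j), computed in the extended reals (= -oo on an empty
   index set) and brought back to R with fine. *)
Definition max_except (R : realType) (K : nat) (k : 'I_K) (v : 'rV[R]_K) : R :=
  fine (\big[Order.max/-oo%E]_(j < K | j != k) ((v 0 j)%:E)).

Definition cdf_of (d : measure_display) (T : measurableType d)
  (R : realType) (P : probability T R) (X : T -> R) (y : R) : R :=
  fine (P [set w | X w <= y]).

(* Main.v *)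
Require Import Defs.
From HB Require Import structures.
From mathcomp Require Import all_boot all_order all_algebra.
From mathcomp Require Import all_classical all_reals all_analysis.
From mathcomp Require Import measurable_realfun.
Import Order.TTheory GRing.Theory Num.Theory.
Import numFieldNormedType.Exports.
Set Implicit Arguments. Unset Strict Implicit. Unset Printing Implicit Defensive.
Local Open Scope classical_set_scope.
Local Open Scope ring_scope.
From mathcomp Require Import ring lra.
Lemma mem_bigsetU (I : eqType) (T : Type) (s : seq I) (Pr : pred I) (F : I -> set T) i x :
  i \in s -> Pr i -> F i x -> (\big[setU/set0]_(j <- s | Pr j) F j) x.
Proof.
elim: s => // a s IH; rewrite in_cons big_cons => /orP[/eqP <-|si] Pi Fx.
  by rewrite Pi; left.
by case: ifP => _; [right|]; exact: IH.
Qed.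

Section N.
Variable R : realType.
Local Open Scope ereal_scope.

Lemma normal_peak1_le1 : (normal_peak (1:R) <= 1)%R.
Proof.
rewrite /normal_peak invf_le1 ?sqrtr_gt0; last first.
  by rewrite expr1n mul1r mulrn_wgt0 // pi_gt0.
rewrite expr1n mul1r -{1}sqrtr1 ler_sqrt; last by rewrite mulrn_wge0 // pi_ge0.
have := @pi_ge2 R => h; rewrite mulr2n; lra.
Qed.

Lemma normal_pdf01_le1 x : (normal_pdf 0 1 x <= 1 :> R)%R.
Proof. exact: le_trans (normal_pdf_ub _ _ (oner_neq0 R)) normal_peak1_le1. Qed.

Lemma normal_itv_le (a b : R) : (a <= b)%R ->
  normal_prob 0 1 `[a, b[ <= (b - a)%:E.
Proof.
move=> ab; rewrite /normal_prob.
apply: (@le_trans _ _ (\int[lebesgue_measure]_(x in `[a, b[) (cst 1) x)).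
  apply: ge0_le_integral => //.
  - by move=> x _; rewrite lee_fin normal_pdf_ge0.
  - apply/measurable_EFinP; apply: measurable_funTS; exact: measurable_normal_pdf.
  - by move=> x _; rewrite lee_fin normal_pdf01_le1.
rewrite integral_cst // mul1e.
have := @lebesgue_measure_itv R `[a, b[ => /= ->.
by case: ifPn => _ //; rewrite lee_fin subr_ge0.
Qed.

Lemma normal_itv_gt0 (a b : R) : (a < b)%R -> 0 < normal_prob 0 1 `]a, b[.
Proof.
move=> ab; rewrite /normal_prob.
set t := (`|a| + `|b|)%R.
set c := normal_pdf 0 1 t.
have c0 : (0 < c)%R.
  by rewrite /c normal_pdfE ?oner_neq0 // mulr_gt0 ?expR_gt0 // normal_peak_gt0 ?oner_neq0.
apply: (@lt_le_trans _ _ (\int[lebesgue_measure]_(x in `]a, b[) (cst c%:E) x)).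
  rewrite integral_cst //.
  have := @lebesgue_measure_itv R `]a, b[ => /= ->.
  rewrite lte_fin ab -EFinB -EFinM lte_fin.
  by rewrite mulr_gt0 // subr_gt0.
apply: ge0_le_integral => //.
- by move=> x _; rewrite lee_fin ltW.
- apply/measurable_EFinP; apply: measurable_funTS; exact: measurable_normal_pdf.
move=> x; rewrite /= in_itv /= => /andP[ax xb].
rewrite lee_fin /c !normal_pdfE ?oner_neq0 //= ler_pM2l ?normal_peak_gt0 ?oner_neq0 //.
rewrite /normal_fun ler_expR !subr0 expr1n.
have hn : (`|x| <= t)%R.
  case: (lerP 0 x) => x0.
    rewrite ger0_norm //; have := ler_norm b; have := normr_ge0 a; rewrite /t; lra.
  rewrite ltr0_norm //; have := ler_norm (-a); rewrite normrN.
  have := normr_ge0 b; rewrite /t; lra.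
have hx : (x ^+ 2 <= t ^+ 2)%R.
  rewrite -(real_normK (num_real x)); have := normr_ge0 x; nra.
rewrite !mulNr lerN2 ler_pM2r //.
Qed.
End N.

Section I.
Variable R : realType.
Definition Iv (dl c : R) (n : nat) : set R :=
  if @pickle_inv int n is Some z then [set x | Num.floor ((x - c) / dl) = z] else set0.

Lemma floor_setE (dl c : R) (z : int) : 0 < dl ->
  [set x | Num.floor ((x - c) / dl) = z] = `[c + z%:~R * dl, c + (z%:~R + 1) * dl[%classic.
Proof.
move=> dl0; apply/seteqP; split => x /=; rewrite in_itv /=.
  move=> <-; have := floor_itv ((x - c) / dl); rewrite intrD.
  set q := (x - c) / dl; set f := (Num.floor q)%:~R.
  have xq : x = c + q * dl by rewrite /q divfK ?gt_eqF //; ring.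
  move=> /andP[h1 h2]; rewrite xq; apply/andP; split; nra.
move=> /andP[h1 h2]; apply: floor_def; rewrite intrD.
rewrite ler_pdivlMr // ltr_pdivrMr //; apply/andP; split; lra.
Qed.

Lemma Iv_measurable dl c n : 0 < dl -> measurable (Iv dl c n).
Proof.
move=> dl0; rewrite /Iv; case: (pickle_inv n) => [z|] //.
by rewrite floor_setE.
Qed.

Lemma Iv_normal dl c n : 0 < dl -> (normal_prob 0 1 (Iv dl c n) <= dl%:E)%E.
Proof.
move=> dl0; rewrite /Iv; case: (pickle_inv n) => [z|].
  rewrite floor_setE //.
  have h := @normal_itv_le R (c + z%:~R * dl) (c + (z%:~R + 1) * dl).
  apply: le_trans (h _) _; first nra.
  rewrite lee_fin; lra.
by rewrite measure0 lee_fin ltW.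
Qed.

Lemma Iv_triv dl c : 0 < dl -> trivIset setT (Iv dl c).
Proof.
move=> dl0 n m _ _ [x []]; rewrite /Iv.
have := @pickle_invK int n; have := @pickle_invK int m.
case: (pickle_inv n) => [z|] //; case: (pickle_inv m) => [z'|] //= em en hn hm.
by rewrite -em -en -hn -hm.
Qed.

Lemma Iv_cover dl c x : exists n, Iv dl c n x.
Proof.
exists (pickle (Num.floor ((x - c) / dl))); by rewrite /Iv pickleK_inv.
Qed.
End I.

Section PushR.
Context {R : realType} {d : measure_display} {T : measurableType d} (P : probability T R) (f : {RV P >-> R}).
Definition pushR (A : set (measurableTypeR R)) : \bar R := P (f @^-1` A).
Let pushR0 : pushR set0 = 0%E.
Proof. by rewrite /pushR preimage_set0 measure0. Qed.
Let pushR_ge0 A : (0 <= pushR A)%E.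
Proof. exact: measure_ge0. Qed.
Let pushR_sigma : semi_sigma_additive pushR.
Proof.
move=> F mF tF mU.
exact: (@measure_semi_sigma_additive _ _ _ (distribution P f) F mF tF mU).
Qed.
HB.instance Definition _ := isMeasure.Build _ _ _ pushR pushR0 pushR_ge0 pushR_sigma.
End PushR.

Section Unif.
Variable R : realType.

Lemma unif_ge (x : R) : uniform_prob (@ltr01 R) `[x, +oo[ =
  (if (x <= 0)%R then 1 else if (x < 1)%R then 1 - x else 0)%:E.
Proof.
case: (lerP x 0) => x0.
  by rewrite /uniform_prob integral_uniform_pdf1 // => y /=; rewrite !in_itv /= andbT => /andP[h _]; exact: le_trans x0 h.
rewrite /uniform_prob integral_uniform_pdf.
case: (lerP x 1) => x1.
  have -> : (`[x, +oo[ `&` `[0, 1] = `[x, 1] :> set R)%classic.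
    apply/seteqP; split => y /=; rewrite !in_itv /= ?andbT.
      by move=> [-> /andP[_ ->]].
    by move=> /andP[h1 h2]; split => //; apply/andP; split => //; exact: le_trans (ltW x0) h1.
  transitivity (\int[lebesgue_measure]_(y in `[x, 1%R]) (cst 1%E) y)%E.
    apply: eq_integral => y; rewrite inE /= in_itv /= => /andP[h1 h2].
    rewrite /uniform_pdf ifT ?subr0 ?invr1 //; apply/andP; split => //.
    exact: le_trans (ltW x0) h1.
  rewrite integral_cst // mul1e.
  have := @lebesgue_measure_itv R `[x, 1] => /= ->.
  case: (ltP x 1) => h; first by rewrite lte_fin h -EFinB.
  by rewrite lte_fin ifN // -leNgt.
have -> : (`[x, +oo[ `&` `[0, 1] = set0 :> set R)%classic.
  apply/seteqP; split => // y /=; rewrite !in_itv /= ?andbT => -[h1 /andP[_ h2]].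
  by have := lt_le_trans (lt_le_trans x1 h1) h2; rewrite ltxx.
have nx0 : (x <= 0)%R = false by apply/negbTE; rewrite -ltNge.
have nx1 : (x < 1)%R = false by apply/negbTE; rewrite -leNgt ltW.
by rewrite integral_set0 ?nx0 ?nx1.
Qed.
End Unif.

Section MaxE.
Variables (R : realType) (K : nat) (k : 'I_K).
Local Open Scope ereal_scope.
Lemma bigmaxE_ge (f : 'I_K -> R) (s : seq 'I_K) j : j \in s -> j != k ->
  (f j)%:E <= \big[Order.max/-oo]_(i <- s | i != k) (f i)%:E.
Proof.
elim: s => // a s IH; rewrite in_cons big_cons => /orP[/eqP <-|js] jk.
  by rewrite jk le_max lexx.
case: ifP => _; last exact: IH.
by rewrite le_max IH ?orbT.
Qed.
Lemma bigmaxE_att (f : 'I_K -> R) (s : seq 'I_K) :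
  \big[Order.max/-oo]_(i <- s | i != k) (f i)%:E = -oo \/
  exists2 j, j != k & \big[Order.max/-oo]_(i <- s | i != k) (f i)%:E = (f j)%:E.
Proof.
elim: s => [|a s IH]; first by left; rewrite big_nil.
rewrite big_cons; case: ifP => ak //.
case: IH => [->|[j jk ->]].
  by right; exists a; rewrite ?ak // maxEge leNye.
right; rewrite /Order.max; case: ifP => _; [by exists j|by exists a; rewrite ?ak].
Qed.
Local Close Scope ereal_scope.
Lemma max_except_spec (v : 'rV[R]_K) j0 : j0 != k ->
  exists2 j1, j1 != k & max_except k v = v 0 j1 /\ forall j, j != k -> v 0 j <= v 0 j1.
Proof.
move=> j0k; rewrite /max_except.
have ge j : j != k -> ((v 0 j)%:E <= \big[Order.max/-oo]_(i < K | i != k) (v 0 i)%:E)%E.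
  by move=> jk; apply: (@bigmaxE_ge (fun i => v 0 i) _ j (mem_index_enum j) jk).
case: (bigmaxE_att (fun i => v 0 i) (index_enum 'I_K)) => [b|[j1 j1k b]].
  by have := ge j0 j0k; rewrite b leeNy_eq.
exists j1 => //; split; first by rewrite b.
by move=> j jk; have := ge j jk; rewrite b lee_fin.
Qed.
End MaxE.
Section Main.
Variables (R : realType) (d : measure_display) (T : measurableType d)
  (P : probability T R) (K : nat) (k : 'I_K) (eps : 'I_K -> {RV P >-> R}).

Definition Mf (w : T) : R := max_except k (\row_j eps j w).
Definition Yf (w : T) : R := Mf w - eps k w.

Lemma measurable_bigm (s : seq 'I_K) : measurable_fun setT
  (fun w => \big[Order.max/-oo%E]_(j <- s | j != k) (((\row_j eps j w) 0 j)%:E)).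
Proof.
elim: s => [|a s IH].
  by under eq_fun do rewrite big_nil; exact: measurable_cst.
under eq_fun do rewrite big_cons.
case: (boolP (a != k)) => ak.
  apply: measurable_maxe => //.
  under eq_fun do rewrite mxE.
  by apply/measurable_EFinP.
by [].
Qed.

Lemma measurable_Yf : measurable_fun setT Yf.
Proof.
apply: measurable_funB => //.
rewrite /Mf /max_except.
apply: (measurableT_comp (@fine_measurable R setT measurableT)) => //.
exact: measurable_bigm.
Qed.

Definition Yrv : {RV P >-> R} := mfun_Sub (mem_set measurable_Yf).
Lemma YrvE w : Yrv w = Yf w. Proof. by []. Qed.
Hypothesis heps_law : forall j, distribution P (eps j) = normal_prob 0 1.
Hypothesis heps_ind : mutually_independent P (fun j => eps j : T -> R).

Lemma Peps j A : P (eps j @^-1` A) = normal_prob 0 1 A.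
Proof. by have := congr1 (fun m => m A) (heps_law j). Qed.

Lemma indep_all (B : 'I_K -> set R) : (forall i, measurable (B i)) ->
  P (\bigcap_(i in [set: 'I_K]) (eps i @^-1` B i)) = (\prod_(i < K) normal_prob 0 1 (B i))%E.
Proof.
by move=> mB; rewrite heps_ind //; apply: eq_bigr => i _; rewrite Peps.
Qed.

Lemma indep2 i1 i2 A B : i1 != i2 -> measurable A -> measurable B ->
  P (eps i1 @^-1` A `&` eps i2 @^-1` B) = (normal_prob 0 1 A * normal_prob 0 1 B)%E.
Proof.
move=> i12 mA mB.
pose C i := if i == i1 then A else if i == i2 then B else setT.
have mC i : measurable (C i) by rewrite /C; case: ifP => _ //; case: ifP.
have := @indep_all C mC.
have -> : \bigcap_(i in [set: 'I_K]) (eps i @^-1` C i) = eps i1 @^-1` A `&` eps i2 @^-1` B.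
  apply/seteqP; split => w /=.
    move=> h; split.
      by have := h i1 I; rewrite /C eqxx.
    by have := h i2 I; rewrite /C eq_sym (negbTE i12) eqxx.
  move=> [h1 h2] i _; rewrite /C; case: ifP => [/eqP -> //|_].
  by case: ifP => [/eqP -> //|].
move=> ->; rewrite (bigD1 i1) //= (bigD1 i2) 1?eq_sym //= big1 ?mule1.
  by rewrite /C eqxx eq_sym (negbTE i12) eqxx.
move=> i /andP[ii1 ii2]; rewrite /C (negbTE ii1) (negbTE ii2).
by have := Peps i setT; rewrite preimage_setT probability_setT => <-.
Qed.

Variable j0 : 'I_K.
Hypothesis j0k : j0 != k.

Lemma M_spec w : exists2 j1, j1 != k &
  Mf w = eps j1 w /\ forall j, j != k -> eps j w <= eps j1 w.
Proof.
have [j1 j1k [h1 h2]] := @max_except_spec R K k (\row_j eps j w) j0 j0k.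
exists j1 => //; split; first by rewrite /Mf h1 mxE.
by move=> j jk; have := h2 j jk; rewrite !mxE.
Qed.

Lemma PY_pos a b : a < b -> (0 < P (Yf @^-1` `]a, b]))%E.
Proof.
move=> ab.
set m := (a + b) / 2; set h := (b - a) / 4.
pose B i : set R := if i == k then `](- m), (- m + h)[%classic else `]0, h[%classic.
have mB i : measurable (B i) by rewrite /B; case: ifP.
apply: (@lt_le_trans _ _ (P (\bigcap_(i in [set: 'I_K]) (eps i @^-1` B i)))).
  rewrite (@indep_all B mB).
  apply: (big_ind (fun x => 0 < x)%E) => //.
    by move=> x y; exact: mule_gt0.
  by move=> i _; rewrite /B; case: ifP => _; apply: normal_itv_gt0; rewrite /h /m; lra.
apply: (@le_measure _ _ _ P); rewrite ?inE.
- apply: fin_bigcap_measurable; first exact: finite_finset.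
  by move=> i _; exact: measurable_funPTI.
- by rewrite -[X in measurable X]setTI; exact: measurable_Yf.
move=> w /= hw; rewrite in_itv /= /Yf.
have [j1 j1k [-> _]] := M_spec w.
have := hw k I; have := hw j1 I; rewrite /B eqxx (negbTE j1k) /= !in_itv /=.
move=> /andP[h1 h2] /andP[h3 h4]; apply/andP; split; rewrite /m /h in h1 h2 h3 h4 *; lra.
Qed.

Lemma PD0 j y : j != k -> P [set w | eps j w - eps k w = y] = 0%E.
Proof.
move=> jk.
set D := [set w | eps j w - eps k w = y].
have mD : measurable D.
  have -> : D = setT `&` (fun w => eps j w - eps k w) @^-1` [set y].
    by rewrite setTI.
  by apply: measurable_funB => //; exact: measurable_set1.
apply/eqP; rewrite eq_le measure_ge0 andbT.
apply/lee_addgt0Pr => dl dl0; rewrite add0e.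
pose F n := eps k @^-1` Iv dl 0 n `&` eps j @^-1` Iv dl y n.
have mF n : measurable (F n).
  by apply: measurableI; apply: measurable_funPTI; exact: Iv_measurable.
have DF : D `<=` \bigcup_n F n.
  move=> w Dw; have [n hn] := Iv_cover dl 0 (eps k w).
  exists n => //; split => //.
  move: hn; rewrite /Iv; case: (pickle_inv n) => [z|] //=.
  by rewrite -Dw; have -> : eps j w - (eps j w - eps k w) = eps k w - 0 by ring.
apply: (le_trans (measure_sigma_subadditive P mF mD DF)).
apply: (@le_trans _ _ (\sum_(n <oo) (dl%:E * normal_prob 0 1 (Iv dl 0 n)))%E).
  apply: lee_nneseries => [n _ _|n _]; first exact: measure_ge0.
  rewrite /F /= (@indep2 k j (Iv dl 0 n) (Iv dl y n)) 1?eq_sym //; try exact: Iv_measurable.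
  rewrite (muleC dl%:E); apply: lee_pmul => //; exact: Iv_normal.
rewrite nneseriesZl //.
rewrite -(measure_semi_bigcup (normal_prob 0 1)) //; last first.
- by apply: bigcup_measurable => n _; exact: Iv_measurable.
- exact: Iv_triv.
- by move=> n; exact: Iv_measurable.
rewrite -[leRHS]mule1; apply: lee_pmul => //; first by rewrite lee_fin ltW.
by apply: probability_le1; apply: bigcup_measurable => n _; exact: Iv_measurable.
Qed.

Lemma PY_atom y : P (Yf @^-1` [set y]) = 0%E.
Proof.
pose D j := [set w | eps j w - eps k w = y].
have mD j : measurable (D j).
  have -> : D j = setT `&` (fun w => eps j w - eps k w) @^-1` [set y].
    by rewrite setTI.
  by apply: measurable_funB => //; exact: measurable_set1.
have nD (s : seq 'I_K) : P.-negligible (\big[setU/set0]_(j <- s | j != k) D j).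
  elim: s => [|a s IH]; first by rewrite big_nil; exact: negligible_set0.
  rewrite big_cons; case: ifP => ak //.
  apply: negligibleU => //.
  by apply/negligibleP => //; exact: PD0.
have mY : measurable (Yf @^-1` [set y]).
  by rewrite -[X in measurable X]setTI; apply: measurable_Yf => //; exact: measurable_set1.
apply/negligibleP => //.
apply: (negligibleS _ (nD (index_enum 'I_K))) => w /= Yw.
have [j1 j1k [Mj _]] := M_spec w.
apply: (@mem_bigsetU _ _ _ _ _ j1) => //; first exact: mem_index_enum.
by rewrite /D /= -Yw /Yf Mj.
Qed.

Lemma mYpre (A : set R) : measurable A -> measurable (Yf @^-1` A).
Proof. by move=> mA; rewrite -[X in measurable X]setTI; exact: measurable_Yf. Qed.

Definition Fc (y : R) : R := fine (P (Yf @^-1` `]-oo, y])).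

Lemma Fc_fin y : P (Yf @^-1` `]-oo, y]) = (Fc y)%:E.
Proof. by rewrite /Fc fineK // fin_num_measure //; exact: mYpre. Qed.

Lemma P_split c : (P (Yf @^-1` `]-oo, c]) + P (Yf @^-1` `[c, +oo[) = 1)%E.
Proof.
have AB : Yf @^-1` `]-oo, c] `|` Yf @^-1` `]c, +oo[ = setT.
  apply/seteqP; split => // w _ /=; rewrite !in_itv /= andbT.
  by case: (leP (Yf w) c) => h; [left|right].
have AB0 : Yf @^-1` `]-oo, c] `&` Yf @^-1` `]c, +oo[ = set0.
  apply/seteqP; split => // w /=; rewrite !in_itv /= andbT => -[h1 h2].
  by move: (le_lt_trans h1 h2); rewrite ltxx.
have C : Yf @^-1` `[c, +oo[ = Yf @^-1` `]c, +oo[ `|` Yf @^-1` [set c].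
  apply/seteqP; split => w /=; rewrite !in_itv /= !andbT.
    by rewrite le_eqVlt => /orP[/eqP ->|h]; [right|left].
  by case=> [/ltW|->].
have BZ : Yf @^-1` `]c, +oo[ `&` Yf @^-1` [set c] = set0.
  apply/seteqP; split => // w /=; rewrite !in_itv /= andbT => -[h1 h2].
  by move: h1; rewrite h2 ltxx.
have hC : P (Yf @^-1` `[c, +oo[) = P (Yf @^-1` `]c, +oo[).
  rewrite C measureU //; try exact: mYpre; try (apply: mYpre; exact: measurable_set1).
  rewrite -[RHS]adde0; congr (_ + _)%E; exact: PY_atom.
rewrite hC -measureU //; try exact: mYpre.
rewrite AB; exact: probability_setT.
Qed.

Lemma Fc_lt a b : a < b -> Fc a < Fc b.
Proof.
move=> ab; have hp := PY_pos ab.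
have e : P (Yf @^-1` `]-oo, b]) = (P (Yf @^-1` `]-oo, a]) + P (Yf @^-1` `]a, b]))%E.
  rewrite -measureU //; try exact: mYpre.
    congr (P _); apply/seteqP; split => w /=; rewrite !in_itv /=.
      by case: (leP (Yf w) a) => h hb; [left|right; rewrite ?h hb].
    by case=> [h|/andP[_ ->]] //; exact: le_trans h (ltW ab).
  apply/seteqP; split => // w /=; rewrite !in_itv /= => -[h1 /andP[h2 _]].
  by move: (le_lt_trans h1 h2); rewrite ltxx.
have fp : P (Yf @^-1` `]a, b]) = (fine (P (Yf @^-1` `]a, b])))%:E.
  by rewrite fineK // fin_num_measure //; exact: mYpre.
have e2 : (Fc b)%:E = (Fc a + fine (P (Yf @^-1` `]a, b])))%:E.
  by rewrite -Fc_fin EFinD -Fc_fin -fp.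
have e3 := EFin_inj e2. rewrite e3.
by rewrite ltrDl -lte_fin -fp.
Qed.

Lemma Fc_le a b : a <= b -> Fc a <= Fc b.
Proof. by rewrite le_eqVlt => /orP[/eqP ->|/Fc_lt/ltW]. Qed.

Lemma Fc_ge0 y : 0 <= Fc y.
Proof. by rewrite /Fc fine_ge0 // measure_ge0. Qed.

Lemma Fc_le1 y : Fc y <= 1.
Proof. by rewrite -lee_fin -Fc_fin probability_le1 //; exact: mYpre. Qed.

Lemma Fc_lt1 y : Fc y < 1.
Proof. by apply: lt_le_trans (Fc_lt _) (Fc_le1 (y + 1)); rewrite ltrDl ltr01. Qed.

Lemma Fc_gt0 y : 0 < Fc y.
Proof. by apply: le_lt_trans (Fc_ge0 (y - 1)) (Fc_lt _); rewrite gtrBl ltr01. Qed.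

Definition nYrv : {RV P >-> R} := mfun_Sub (mem_set (measurable_funN measurable_Yf)).

Lemma Fc_cdf y : cdf Yrv y = (Fc y)%:E.
Proof. exact: Fc_fin. Qed.

Lemma Fc_nY z : Fc z = 1 - fine (cdf nYrv (- z)).
Proof.
have e : cdf nYrv (- z) = P (Yf @^-1` `[z, +oo[).
  transitivity (P ((fun w => - Yf w) @^-1` `]-oo, - z])); first by [].
  congr (P _); by apply/seteqP; split => w /=; rewrite !in_itv /= andbT lerN2.
have := P_split z; rewrite Fc_fin e.
have -> : P (Yf @^-1` `[z, +oo[) = (fine (P (Yf @^-1` `[z, +oo[)))%:E.
  by rewrite fineK // fin_num_measure //; exact: mYpre.
rewrite -EFinD => h; have h2 := congr1 fine h; simpl in h2; lra.
Qed.

Lemma Fc_rc y : Fc x @[x --> y^'+] --> Fc y.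
Proof.
have h : cdf Yrv x @[x --> y^'+] --> (Fc y)%:E.
  by rewrite -Fc_cdf; exact: cdf_right_continuous.
exact: fine_cvg h.
Qed.

Lemma Fc_lc y : Fc x @[x --> y^'-] --> Fc y.
Proof.
apply/cvg_at_leftNP.
have e : Fc \o -%R = (fun z => 1 - fine (cdf nYrv z)).
  by apply/funext => z /=; rewrite Fc_nY opprK.
rewrite e [X in _ --> X]Fc_nY; apply: (@cvgB _ R^o); first exact: cvg_cst.
have h : cdf nYrv x @[x --> (- y)^'+] --> (fine (cdf nYrv (- y)))%:E.
  by rewrite fineK ?fin_num_measure //; exact: cdf_right_continuous.
exact: fine_cvg h.
Qed.

Lemma Fc_cont : continuous Fc.
Proof. by move=> y; apply/left_right_continuousP; split; [exact: Fc_lc|exact: Fc_rc]. Qed.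

Lemma Fc_small s : 0 < s -> exists y, Fc y < s.
Proof.
move=> s0.
have h : cdf Yrv x @[x --> -oo] --> 0%:E := cvg_cdfNy0 Yrv.
have [M [_ hM]] := @cvgr_lt R R _ _ _ 0 (fine_cvg h) s s0.
by exists (M - 1); apply: hM; rewrite gtrBl ltr01.
Qed.

Lemma Fc_big s : s < 1 -> exists y, s < Fc y.
Proof.
move=> s1.
have h : cdf Yrv x @[x --> +oo] --> 1%:E := cvg_cdfy1 Yrv.
have [M [_ hM]] := @cvgr_gt R R _ _ _ 1 (fine_cvg h) s s1.
by exists (M + 1); apply: hM; rewrite ltrDl ltr01.
Qed.

Lemma Fc_onto s : 0 < s < 1 -> exists c, Fc c = s.
Proof.
move=> /andP[s0 s1]; have [y1 h1] := Fc_small s0; have [y2 h2] := Fc_big s1.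
have y12 : y1 <= y2.
  case: (leP y1 y2) => // /ltW /Fc_le h; exfalso.
  by have := lt_trans (le_lt_trans h h1) h2; rewrite ltxx.
have hs : Num.min (Fc y1) (Fc y2) <= s <= Num.max (Fc y1) (Fc y2).
  rewrite min_l ?max_r ?Fc_le //; apply/andP; split; exact: ltW.
have [c _ hc] := IVT y12 (continuous_subspaceT Fc_cont) hs.
by exists c.
Qed.

Lemma Fc_ltE a b : (Fc a < Fc b) = (a < b).
Proof.
case: (ltP a b) => h; first exact: Fc_lt.
by apply/negbTE; rewrite -leNgt; exact: Fc_le.
Qed.

Definition Ur (x : R) : R := if x <= 0 then 1 else if x < 1 then 1 - x else 0.

Lemma P_u_ge x : P ((fun w => Fc (Yf w)) @^-1` `[x, +oo[) = (Ur x)%:E.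
Proof.
rewrite /Ur; case: (leP x 0) => x0.
  rewrite (_ : _ @^-1` _ = setT) ?probability_setT //.
  apply/seteqP; split => // w _ /=; rewrite in_itv /= andbT.
  exact: le_trans x0 (Fc_ge0 _).
case: (ltP x 1) => x1; last first.
  rewrite (_ : _ @^-1` _ = set0) ?measure0 //.
  apply/seteqP; split => // w /=; rewrite in_itv /= andbT => h.
  by have := lt_le_trans (le_lt_trans h (Fc_lt1 (Yf w))) x1; rewrite ltxx.
have [c hc] := Fc_onto (introT andP (conj x0 x1)).
rewrite (_ : _ @^-1` _ = Yf @^-1` `[c, +oo[); last first.
  apply/seteqP; split => w /=; rewrite !in_itv /= !andbT -hc.
    by move=> h; rewrite leNgt; apply/negP => /Fc_lt; rewrite ltNge h.
  exact: Fc_le.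
have := P_split c; rewrite Fc_fin hc.
have -> : P (Yf @^-1` `[c, +oo[) = (fine (P (Yf @^-1` `[c, +oo[)))%:E.
  by rewrite fineK // fin_num_measure //; exact: mYpre.
rewrite -EFinD => h; have h2 := congr1 fine h; simpl in h2.
congr (_%:E); lra.
Qed.

Lemma mFY : measurable_fun setT (fun w => Fc (Yf w)).
Proof.
apply: (measurableT_comp (nondecreasing_measurable measurableT _) measurable_Yf).
by move=> a b; exact: Fc_le.
Qed.

Definition urv : {RV P >-> R} := mfun_Sub (mem_set mFY).

Lemma mR_G : (@measurable _ (measurableTypeR R)) = <<s (@RGenCInfty.G R)>>.
Proof. exact: (@RGenCInfty.measurableE R). Qed.

Lemma part1 A : measurable A ->
  P ((fun w => Fc (Yf w)) @^-1` A) = uniform_prob (@ltr01 R) A.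
Proof.
move=> mA.
have := @measure_unique _ R (measurableTypeR R) (@RGenCInfty.G R)
  (fun n : nat => `[- (n%:R), +oo[%classic) mR_G _ _ _
  (@pushR _ _ _ P urv) (uniform_prob (@ltr01 R)) _ _ A mA.
apply.
- move=> _ _ [x ->] [y ->]; exists (Num.max x y).
  apply/seteqP; split => z /=; rewrite !in_itv /= !andbT ge_max; [by case=> -> ->|by move=> /andP].
- by move=> n; exists (- n%:R).
- apply/seteqP; split => // z _; exists (Num.bound `|z|) => //=.
  have h := archi_boundP (normr_ge0 z).
  rewrite in_itv /= andbT lerNl; apply: le_trans (ltW h).
  by rewrite -[X in _ <= X]normrN; exact: ler_norm.
- move=> _ [x ->]; exact: (etrans (P_u_ge x) (esym (unif_ge x))).
- move=> n; rewrite /pushR (le_lt_trans (probability_le1 _ _)) ?ltry //.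
  exact: measurable_funPTI.
Qed.

Lemma part2 (a s : R) (s0 : 0 < s) (w : T) :
  (max_except k (a *: ebasis R K k + s *: \row_j eps j w) <
     (a *: ebasis R K k + s *: \row_j eps j w) 0 k) = (Yf w < a / s).
Proof.
set v := a *: ebasis R K k + s *: \row_j eps j w.
have vk : v 0 k = a + s * eps k w by rewrite /v !mxE /= eqxx mulr1.
have vj j : j != k -> v 0 j = s * eps j w.
  move=> jk; have jk' : (j : nat) != k := jk.
  by rewrite /v !mxE /= (negbTE jk') mulr0 add0r.
have [j1 j1k [hm1 hge1]] := @max_except_spec R K k v j0 j0k.
have [j2 j2k [hM hge2]] := M_spec w.
have Mv : max_except k v = s * Mf w.
  rewrite hm1 vj // hM; apply/eqP; rewrite eq_le; apply/andP; split.
    by rewrite ler_pM2l //; exact: hge2.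
  by have := hge1 j2 j2k; rewrite !vj.
rewrite Mv vk /Yf ltr_pdivlMr //.
by apply/idP/idP => h; lra.
Qed.

End Main.

Theorem theorem3p3 (R : realType) (d : measure_display) (T : measurableType d)
  (P : probability T R) (K : nat) (hK : (2 <= K)%N) (k : 'I_K)
  (hk : (k.+1 < K)%N)
  (eps : 'I_K -> {RV P >-> R})
  (heps_law : forall j, distribution P (eps j) = normal_prob 0 1)
  (heps_ind : mutually_independent P (fun j => eps j : T -> R))
  (gamma alpha sigma : R -> R)
  (hgamma : forall t : R, 0 <= t <= 1 -> 0 < gamma t < 1)
  (hsigma : forall t : R, 0 <= t <= 1 -> 0 < sigma t)
  (hnorm : forall t : R, 0 <= t <= 1 -> alpha t ^+ 2 + sigma t ^+ 2 = 1)
  (Y : T -> R)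
  (hY : forall w, Y w = max_except k (\row_j eps j w) - eps k w)
  (hF : forall t : R, 0 <= t <= 1 -> cdf_of P Y (alpha t / sigma t) = gamma t)
  (x0 eK : 'rV[R]_K) (hx0 : x0 = ebasis R K k) (heK : eK = ebasis R K K.-1)
  (wt zt : R -> T -> 'rV[R]_K)
  (hw : forall (t : R) (w : T), wt t w = alpha t *: x0 + sigma t *: \row_j eps j w)
  (hz : forall (t : R) (w : T), zt t w =
          if wt t w 0 k > max_except k (wt t w) then x0 else eK)
  (u : T -> R) (hu : forall w, u w = cdf_of P Y (Y w)) :
  (forall A : set R, measurable A ->
     P (u @^-1` A) = uniform_prob (@ltr01 R) A) /\
  (forall t : R, 0 <= t <= 1 -> forall w,
     zt t w = if gamma t > u w then x0 else eK).
Proof.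
pose j0 : 'I_K := Ordinal hk.
have j0k : j0 != k by apply/eqP => /(congr1 val) /= /esym /n_Sn.
have YE : Y = @Yf R d T P K k eps by apply/funext => w; rewrite hY.
have cdfE y : cdf_of P Y y = @Fc R d T P K k eps y.
  rewrite YE /cdf_of /Fc; congr (fine (P _)).
have uE w : u w = @Fc R d T P K k eps (@Yf R d T P K k eps w).
  by rewrite hu cdfE YE.
split.
  move=> A mA.
  have -> : u @^-1` A = (fun w => @Fc R d T P K k eps (@Yf R d T P K k eps w)) @^-1` A.
    by apply/seteqP; split => w /=; rewrite uE.
  exact: (part1 heps_law heps_ind j0k mA).
move=> t t01 w; rewrite hz; congr (if _ then _ else _).
rewrite hw hx0 (part2 eps j0k _ (hsigma t t01)).
by rewrite -(hF t t01) cdfE uE (Fc_ltE heps_law heps_ind j0k).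
Qed.
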